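(* Consider the state space model and the extended alive particle filter (APF) described in the context, with $N\ge1$. For all integers $t\le T$ and $h\ge 0$ with $t-h\ge 1$, $$\mathbb{E}\left[\prod_{t'=t-h}^{t} \frac{\sum_{n=1}^N w_{t'}^{(n)}}{P_{t'} - 1}\,\middle|\, \mathcal{F}_{t-h-1}\right] = \sum_{n=1}^N \frac{w_{t-h-1}^{(n)}}{\sum_{m=1}^N w_{t-h-1}^{(m)}}\, p\!\left(y_{t-h:t} \,\middle|\, x_{t-h-1}^{(n)}\right).$$
   Context: State space model: $x_0\sim p(x_0)$; for $t=1,\dots,T$, $x_t \sim f_t(x_t\mid x_{t-1})$ and $y_t\sim g_t(y_t\mid x_t)$; the observations $y_1,\dots,y_T$ are fixed. For $s\ge t$, $p(y_{t:s}\mid x_{t-1})$ denotes the conditional density of $y_t,\dots,y_s$ given $x_{t-1}$ under this model. Extended alive particle filter with $N$ particles: initially draw $x_0^{(1)},\dots,x_0^{(N)}$ independently from $p(x_0)$ and set $w_0^{(n)}=1$. For each $t=1,\dots,T$: set $P_t\gets 0$; for each $n=1,\dots,N+1$, repeat the following until the weight is positive: draw an index $a$ from the categorical distribution with probabilities $w_{t-1}^{(m)}/\sum_{l=1}^N w_{t-1}^{(l)}$, $m=1,\dots,N$; draw $x_t^{(n)}\sim f_t(\cdot\mid x_{t-1}^{(a)})$; increment $P_t$ by one; set $w_t^{(n)} = g_t(y_t\mid x_t^{(n)})$. Thus $P_t$ is the total number of propagations (including those for the $(N+1)$-th particle) at time $t$. $\mathcal{F}_t=\{x_t^{(n)},w_t^{(n)}\}_{n=1}^N$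 denotes the states and weights of the first $N$ particles at time $t$. *)

(* Defs.v *)
From HB Require Import structures.
From mathcomp Require Import all_boot all_order all_algebra.
From mathcomp Require Import all_classical all_reals all_analysis.
Set Implicit Arguments. Unset Strict Implicit. Unset Printing Implicit Defensive.
Import Order.TTheory GRing.Theory Num.Theory.
Local Open Scope ring_scope.
Local Open Scope ereal_scope.

(*   f t : probability kernel x_{t-1} |-> law of x_t   (transition f_t)      *)
(*   g t x y : observation density g_t(y | x), y t : fixed observation y_t   *)
(* A particle configuration F_t = {x^(n), w^(n)}_{n=1..N} is a seq of        *)
(* (state, weight) pairs of size N.                                          *)

Section APF.
Context {R : realType} {d dy : measure_display}
  (X : measurableType d) (Y : measurableType dy).

Definition config := seq (X * R).

Definition total_weight (c : config) : R := (\sum_(p <- c) p.2)%R.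

(* Expectation of phi(x) when one "try" of the APF at time t is made from  *)
(* configuration c: draw an index a with probability w^(a)/sum_l w^(l), then *)
(* draw x ~ f_t(. | x^(a)).                                                  *)
Definition try_exp (f : nat -> R.-pker X ~> X) (t : nat) (c : config)
  (phi : X -> \bar R) : \bar R :=
  \sum_(p <- c) ((p.2 / total_weight c)%:E * \int[f t p.1]_x phi x).

(* Expectation of psi(k, x) where (k, x) is the outcome of the loop         *)
(* "repeat a try until the weight G(x) is positive": k is the number of       *)
(* tries made and x the accepted state.  [tries_exp n] is the contribution   *)
(* of the event "the loop stops exactly at try n+1" (n failed tries first). *)
Fixpoint tries_exp (E : (X -> \bar R) -> \bar R) (G : X -> R) (n : nat)
  (psi : nat -> X -> \bar R) : \bar R :=
  match n with
  | 0 => E (fun x => if (0 < G x)%R then psi 1%N x else 0)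
  | n'.+1 => E (fun x => if (0 < G x)%R then 0
                       else tries_exp E G n' (fun k y => psi k.+1 y))
  end.

Definition loop_exp (E : (X -> \bar R) -> \bar R) (G : X -> R)
  (psi : nat -> X -> \bar R) : \bar R :=
  \sum_(0 <= n <oo) tries_exp E G n psi.

(* Independent loops for m particles: Phi receives the list of outcomes     *)
(* (k_n, x_n), n = 1..m, in order.                                           *)
Fixpoint loops_exp (E : (X -> \bar R) -> \bar R) (G : X -> R) (m : nat)
  (Phi : seq (nat * X) -> \bar R) : \bar R :=
  match m with
  | 0 => Phi [::]
  | m'.+1 => loop_exp E G (fun k x =>
               loops_exp E G m' (fun rest => Phi ((k, x) :: rest)))
  end.

(* One step of the extended APF at time t, from F_{t-1} = c with N          *)
(* particles: expectation of Phi(F_t, P_t).  N+1 particles are propagated;   *)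
(* F_t keeps the first N (with weights w = g_t(y_t | x)) and P_t is the      *)
(* total number of propagations.                                             *)
Definition apf_step_exp (N : nat) (f : nat -> R.-pker X ~> X)
  (g : nat -> X -> Y -> R) (y : nat -> Y) (t : nat) (c : config)
  (Phi : config -> nat -> \bar R) : \bar R :=
  loops_exp (try_exp f t c) (fun x => g t x (y t)) N.+1 (fun outs =>
    Phi [seq (o.2, g t o.2 (y t)) | o <- take N outs]
        (sumn [seq o.1 | o <- outs])).

(* Conditional expectation given F_s = c of a functional of                 *)
(* (F_{s+1}, P_{s+1}), ..., (F_{s+n}, P_{s+n}) (listed in time order):      *)
(* the iterated integral w.r.t. the Markov transitions of the APF.           *)
Fixpoint apf_cond_exp (N : nat) (f : nat -> R.-pker X ~> X)
  (g : nat -> X -> Y -> R) (y : nat -> Y) (s n : nat) (c : config)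
  (F : seq (config * nat) -> \bar R) : \bar R :=
  match n with
  | 0 => F [::]
  | n'.+1 => apf_step_exp N f g y s.+1 c (fun c' P =>
               apf_cond_exp N f g y s.+1 n' c' (fun rest => F ((c', P) :: rest)))
  end.

(* p(y_{t : t+len-1} | x_{t-1} = x) *)
Fixpoint obs_density (f : nat -> R.-pker X ~> X) (g : nat -> X -> Y -> R)
  (y : nat -> Y) (t len : nat) (x : X) : \bar R :=
  match len with
  | 0 => 1
  | len'.+1 => \int[f t x]_x' ((g t x' (y t))%:E
                                * obs_density f g y t.+1 len' x')
  end.

End APF.

(* Main.v *)
Require Import Defs.
From HB Require Import structures.
From mathcomp Require Import all_boot all_order all_algebra.
From mathcomp Require Import all_classical all_reals all_analysis.
From mathcomp Require Import zify ring lra.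
From mathcomp Require Import measurable_realfun.
Set Implicit Arguments. Unset Strict Implicit. Unset Printing Implicit Defensive.
Import Order.TTheory GRing.Theory Num.Theory.
Local Open Scope ring_scope.
Local Open Scope ereal_scope.

Section A.
Context {R : realType}.

Lemma nneseries_diag (b : nat -> nat -> \bar R) : (forall n s, 0 <= b n s) ->
 \sum_(0 <= n <oo) \sum_(0 <= s <oo) b n s =
 \sum_(0 <= t <oo) \sum_(0 <= n < t.+1) b n (t - n)%N.
Proof.
move=> b0.
pose g n t := if (n <= t)%N then b n (t - n)%N else 0.
have g0 n t : 0 <= g n t by rewrite /g; case: ifP.
have step1 n : \sum_(0 <= s <oo) b n s = \sum_(0 <= t <oo) g n t.
  rewrite [RHS](nneseries_split 0 n) // add0n big_nat_cond big1; last first.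
    by move=> i /andP[/andP[_ hi] _]; rewrite /g leqNgt hi.
  rewrite add0e -(@nneseries_addn _ (g n) n) //.
  by apply: eq_eseriesr => i _; rewrite /g leq_addl addnK.
have step3 t : \sum_(0 <= n <oo) g n t = \sum_(0 <= n < t.+1) b n (t - n)%N.
  rewrite (nneseries_split 0 t.+1) //= add0n eseries0 ?adde0; last first.
    by move=> i hi _; rewrite /g leqNgt hi.
  rewrite big_nat_cond [RHS]big_nat_cond.
  by apply: eq_bigr => i /andP[/andP[_ hi] _]; rewrite /g -ltnS hi.
transitivity (\sum_(0 <= n <oo) \sum_(0 <= t <oo) g n t).
  by apply: eq_eseriesr => n _; apply: step1.
rewrite nneseries_interchange //.
by apply: eq_eseriesr => t _; apply: step3.
Qed.

Lemma hockey (m t : nat) : (\sum_(0 <= n < t.+1) 'C(t - n + m, m) = 'C(t + m.+1, m.+1))%N.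
Proof.
elim: t => [|t IH]; first by rewrite big_nat1 subn0 add0n !binn.
rewrite big_nat_recl // subn0.
rewrite (eq_bigr (fun n => 'C(t - n + m, m))); last by move=> i _; rewrite subSS.
by rewrite IH [(t.+1 + m.+1)%N]addSn binS addnC addSnnS.
Qed.


Fixpoint nest (x : R) (m : nat) (A : nat -> \bar R) (j : nat) : \bar R :=
  if m is m'.+1 then \sum_(0 <= n <oo) ((x ^+ n)%:E * nest x m' A (j + n).+1)
  else A j.

Lemma nest_ge0 x m A j : (0 <= x)%R -> (forall i, 0 <= A i) -> 0 <= nest x m A j.
Proof.
move=> x0 A0; elim: m j => [|m IH] j //=.
apply: nneseries_ge0 => n _ _; apply: mule_ge0 => //.
by rewrite lee_fin exprn_ge0.
Qed.

Lemma nest_flat x m A j : (0 <= x)%R -> (forall i, 0 <= A i) ->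
  nest x m.+1 A j =
  \sum_(0 <= s <oo) (('C(s + m, m)%:R * x ^+ s)%:E * A (j + s + m).+1%N).
Proof.
move=> x0 A0; elim: m j => [|m IH] j.
  by rewrite /=; apply: eq_eseriesr => n _; rewrite bin0 mul1r addn0.
rewrite [LHS]/=.
have e1 n : ((x ^+ n)%:E * nest x m.+1 A (j + n).+1) =
    \sum_(0 <= s <oo) ((x ^+ n * ('C(s + m, m)%:R * x ^+ s))%:E
                         * A ((j + n).+1 + s + m).+1%N).
  rewrite IH -nneseriesZl; last first.
    by move=> i _; apply: mule_ge0 => //; rewrite lee_fin mulr_ge0 ?exprn_ge0.
  by apply: eq_eseriesr => i _; rewrite muleA EFinM.
rewrite (eq_eseriesr (fun n _ => e1 n)) nneseries_diag; last first.
  by move=> n s; apply: mule_ge0 => //; rewrite lee_fin !mulr_ge0 ?exprn_ge0.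
apply: eq_eseriesr => t _.
rewrite big_nat_cond.
rewrite (eq_bigr (fun n => (('C(t - n + m, m)%:R * x ^+ t)%:E
                   * A (j + t + m.+1).+1%N))); last first.
  move=> n /andP[/andP[_ hn] _]; congr (_%:E * A _).
    by rewrite mulrCA -exprD subnKC // -ltnS.
  by rewrite ltnS in hn; lia.
rewrite -big_nat_cond -ge0_sume_distrl; last first.
  by move=> n _; rewrite lee_fin mulr_ge0 ?exprn_ge0.
by rewrite sumEFin -big_distrl /= -natr_sum hockey addnS.
Qed.


Lemma geo_e (x : R) : (0 <= x)%R -> (x < 1)%R ->
  \sum_(0 <= n <oo) (x ^+ n)%:E = ((1 - x)^-1)%:E.
Proof.
move=> x0 x1; apply/cvg_lim => //.
apply: cvg_EFin; first by apply: nearW => n; rewrite sumEFin.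
have -> : (fine \o (fun n => \sum_(0 <= k < n) (x ^+ k)%:E)) =
    series (geometric 1 x).
  by apply/funext => n /=; rewrite sumEFin /= /series /=; apply: eq_bigr => i _; rewrite mul1r.
have := @cvg_geometric_series R 1 x; rewrite mul1r; apply.
by rewrite ger0_norm.
Qed.

Lemma nest_cst x m j : (0 <= x)%R -> (x < 1)%R ->
  nest x m (fun _ => 1) j = (((1 - x)^-1) ^+ m)%:E.
Proof.
move=> x0 x1; elim: m j => [|m IH] j //=.
under eq_eseriesr do rewrite IH muleC.
rewrite nneseriesZl; last by move=> i _; rewrite lee_fin exprn_ge0.
by rewrite geo_e // -EFinM exprS mulrC.
Qed.

Lemma nest_rho x N a : (0 <= x)%R -> (x < 1)%R -> (0 <= a)%R -> (1 <= N)%N ->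
  nest x N.+1 (fun P => (a / (P.-1)%:R)%:E) 0 =
  (a / N%:R * ((1 - x)^-1) ^+ N)%:E.
Proof.
move=> x0 x1 a0; case: N => // N _.
rewrite nest_flat //; last by move=> i; rewrite lee_fin divr_ge0.
rewrite EFinM -(nest_cst N.+1 0 x0 x1) nest_flat // -nneseriesZl; last first.
  by move=> i _; rewrite mule_ge0 // lee_fin mulr_ge0 ?exprn_ge0.
apply: eq_eseriesr => s _; rewrite mule1 -EFinM; congr _%:E.
rewrite add0n /= !addnS /=.
have h : ('C(s + N.+1, N.+1) * N.+1 = 'C(s + N, N) * (s + N).+1)%N.
  by rewrite mulnC addnS -mul_bin_diag mulnC.
have hpos : ((s + N).+1%:R : R) != 0%R by rewrite pnatr_eq0.
have hpos' : (N.+1%:R : R) != 0%R by rewrite pnatr_eq0.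
have hR := congr1 (fun n => n%:R : R) h; rewrite /= !natrM in hR.
rewrite -addnS.
have -> : ('C(s + N.+1, N.+1)%:R : R) = ('C(s + N, N)%:R * (s + N).+1%:R / N.+1%:R)%R.
  by rewrite -hR mulfK.
field; rewrite -natr1 addrC in hpos'; rewrite hpos' /=.
by move: hpos; rewrite -addnS natrD -natr1 addrC.
Qed.

Lemma nneseriesZr_e (f : nat -> \bar R) (K : \bar R) :
  (forall n, 0 <= f n) -> 0 <= K ->
  \sum_(0 <= n <oo) (f n * K) = (\sum_(0 <= n <oo) f n) * K.
Proof.
move=> f0; case: K => [k| |] // hK.
  under eq_eseriesr do rewrite muleC.
  by rewrite nneseriesZl // muleC.
have S0 : 0 <= \sum_(0 <= n <oo) f n by apply: nneseries_ge0.
case: (eqVneq (\sum_(0 <= n <oo) f n) 0) => [SE|SN].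
  have fz n : f n = 0.
    apply/eqP; rewrite eq_le f0 andbT -SE.
    apply: le_trans (nneseries_lim_ge n.+1 (fun i _ _ => f0 i)).
    by rewrite big_nat_recr //= leeDr // sume_ge0.
  rewrite SE mul0e; apply: eseries0 => i _ _; by rewrite fz mul0e.
have [n fn] : exists n, f n != 0.
  apply/not_existsP => H; move/eqP: SN; apply; apply: eseries0 => i _ _.
  by have := H i; move/negP; rewrite negbK => /eqP.
have fpos : 0 < f n by rewrite lt_def fn f0.
rewrite gt0_muley; last by rewrite lt_def SN S0.
apply/eqP; rewrite eq_le leey /=.
apply: le_trans (nneseries_lim_ge n.+1 (fun i _ _ => mule_ge0 (f0 i) hK)).
rewrite big_nat_recr //= gt0_muley // lee_paddl //.
by apply: sume_ge0 => i _; apply: mule_ge0.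
Qed.

End A.

Section B.
Context {R : realType} {d : measure_display} {X : measurableType d}.
Variable E : (X -> \bar R) -> \bar R.
Variable G : X -> R.
Variable H : X -> \bar R.
Hypothesis EZ : forall (C : \bar R) (phi : X -> \bar R), 0 <= C ->
  (forall y, 0 <= phi y) -> measurable_fun setT phi ->
  E (fun y => C * phi y) = C * E phi.
Hypothesis ED : forall (phi psi : X -> \bar R),
  (forall y, 0 <= phi y) -> measurable_fun setT phi ->
  (forall y, 0 <= psi y) -> measurable_fun setT psi ->
  E (fun y => phi y + psi y) = E phi + E psi.
Hypothesis E0 : forall phi : X -> \bar R, (forall y, 0 <= phi y) -> 0 <= E phi.
Hypothesis mG : measurable_fun setT G.
Hypothesis H0 : forall y, 0 <= H y.
Hypothesis mH : measurable_fun setT H.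
Variables x z : R.
Hypothesis x0 : (0 <= x)%R.
Hypothesis z0 : (0 <= z)%R.
Hypothesis p0E : E (fun y => if (0 < G y)%R then 0 else 1) = x%:E.
Hypothesis p1E : E (fun y => if (0 < G y)%R then 1 else 0) = z%:E.

Let muH := E (fun y => if (0 < G y)%R then H y else 0).

Lemma mif (a b : X -> \bar R) : measurable_fun setT a -> measurable_fun setT b ->
  measurable_fun setT (fun y => if (0 < G y)%R then a y else b y).
Proof.
move=> ma mb; apply: measurable_fun_ifT => //.
by apply: measurable_fun_ltr => //; exact: measurable_cst.
Qed.

Lemma tries_ge0 n psi : (forall k y, 0 <= psi k y) -> 0 <= tries_exp E G n psi.
Proof.
elim: n psi => [|n IH] psi psi0 /=; apply: E0 => y; case: ifP => //.
by move=> _; apply: IH.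
Qed.

Lemma tries_lemma n psi : (forall k y, 0 <= psi k y) ->
  tries_exp E G n psi = (x ^+ n)%:E * E (fun y => if (0 < G y)%R then psi n.+1 y else 0).
Proof.
elim: n psi => [|n IH] psi psi0; first by rewrite /= expr0 mul1e.
rewrite [LHS]/=.
set T := tries_exp E G n _.
have -> : (fun y => if (0 < G y)%R then 0 else T) =
          (fun y => T * (if (0 < G y)%R then 0 else 1)).
  by apply/funext => y; case: ifP; rewrite ?mule0 ?mule1.
rewrite EZ; last 3 first.
- by apply: tries_ge0 => k y; apply: psi0.
- by move=> y; case: ifP.
- by apply: mif; exact: measurable_cst.
rewrite p0E /T IH; last by move=> k y; apply: psi0.
by rewrite muleAC -EFinM exprSr.
Qed.

Lemma loop_lemma psi : (forall k y, 0 <= psi k y) ->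
  loop_exp E G psi = \sum_(0 <= n <oo) ((x ^+ n)%:E *
     E (fun y => if (0 < G y)%R then psi n.+1 y else 0)).
Proof. by move=> psi0; apply: eq_eseriesr => n _; apply: tries_lemma. Qed.


Lemma GL (beta : nat -> \bar R) (beta0 : forall P, 0 <= beta P) m :
  forall r j S, (r <= m)%N -> 0 <= S ->
  loops_exp E G m (fun outs =>
     (S + \sum_(o <- take r outs) H o.2) * beta (j + sumn [seq o.1 | o <- outs])%N)
  = (S * (z ^+ m)%:E + ((r%:R * z ^+ m.-1)%:E * muH)) * nest x m beta j.
Proof.
have muH0 : 0 <= muH by apply: E0 => y; case: ifP.
elim: m => [|m IH] r j S hr hS.
  move: hr; rewrite leqn0 => /eqP ->.
  by rewrite /= big_nil adde0 addn0 expr0 mule1 mul0r mul0e adde0.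
rewrite [LHS]/=.
pose hy y : \bar R := if r is 0 then 0 else H y.
have hy0 y : 0 <= hy y by rewrite /hy; case: (r).
have inner : (fun k y => loops_exp E G m (fun rest =>
     (S + \sum_(o <- take r ((k, y) :: rest)) H o.2) *
       beta (j + (k + sumn [seq o.1 | o <- rest]))%N)) =
   (fun k y => ((S + hy y) * (z ^+ m)%:E + ((r.-1%:R * z ^+ m.-1)%:E * muH))
                 * nest x m beta (j + k)%N).
  apply/funext => k; apply/funext => y.
  rewrite -IH; last 2 first.
  - by move: hr; case: (r).
  - by apply: adde_ge0.
  congr (loops_exp _ _ _ _); apply/funext => rest.
  rewrite /= addnA; congr (_ * _).
  by rewrite /hy; case: (r) => [|r0] /=; rewrite ?take0 ?big_nil ?big_cons ?adde0 ?addeA.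
rewrite inner loop_lemma; last first.
  move=> k y; apply: mule_ge0; last by apply: nest_ge0.
  apply: adde_ge0; first by apply: mule_ge0 => //; [apply: adde_ge0|rewrite lee_fin exprn_ge0].
  by apply: mule_ge0 => //; rewrite lee_fin mulr_ge0 ?exprn_ge0.
set Zm := (z ^+ m)%:E.
set cmu := (r.-1%:R * z ^+ m.-1)%:E * muH.
have cmu0 : 0 <= cmu by apply: mule_ge0 => //; rewrite lee_fin mulr_ge0 ?exprn_ge0.
have Zm0 : 0 <= Zm by rewrite lee_fin exprn_ge0.
pose Zr : R := if r is 0 then 0%R else (z ^+ m)%R.
have Zr0 : (0 <= Zr)%R by rewrite /Zr; case: (r) => //; rewrite exprn_ge0.
have Ecomp (Nn : \bar R) : 0 <= Nn ->
  E (fun y => if (0 < G y)%R then ((S + hy y) * Zm + cmu) * Nn else 0) =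
  Nn * ((S * Zm + cmu) * z%:E + Zr%:E * muH).
  move=> Nn0.
  have -> : (fun y => if (0 < G y)%R then ((S + hy y) * Zm + cmu) * Nn else 0) =
     (fun y => Nn * ((fun y => (S * Zm + cmu) * (if (0 < G y)%R then 1 else 0)) y
                   + (fun y => Zr%:E * (if (0 < G y)%R then H y else 0)) y)).
    apply/funext => y /=; case: ifP => Gy; last by rewrite !mule0 adde0 mule0.
    rewrite mule1 muleC /hy /Zr; case: (r) => [|r0].
      by rewrite adde0 mul0e adde0.
    by rewrite ge0_muleDl // addeAC [H y * _]muleC.
  have mind : measurable_fun setT (fun y => if (0 < G y)%R then (1 : \bar R) else 0).
    by apply: mif; exact: measurable_cst.
  have mH' : measurable_fun setT (fun y => if (0 < G y)%R then H y else 0).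
    by apply: mif => //; exact: measurable_cst.
  have SZ0 : 0 <= S * Zm + cmu by apply: adde_ge0 => //; apply: mule_ge0.
  rewrite EZ //; last 2 first.
  - move=> y; apply: adde_ge0; apply: mule_ge0 => //; rewrite ?lee_fin //;
      by case: ifP.
  - apply: emeasurable_funD; apply: emeasurable_funM => //; exact: measurable_cst.
  rewrite ED; last 4 first.
  - by move=> y; apply: mule_ge0 => //; case: ifP.
  - by apply: emeasurable_funM => //; exact: measurable_cst.
  - by move=> y; apply: mule_ge0; rewrite ?lee_fin //; case: ifP.
  - by apply: emeasurable_funM => //; exact: measurable_cst.
  rewrite EZ //; last by move=> y; case: ifP.
  rewrite EZ //; last by move=> y; case: ifP.
  by rewrite p1E.
have Nn0 n : 0 <= nest x m beta (j + n.+1)%N by apply: nest_ge0.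
under eq_eseriesr do rewrite Ecomp // muleA.
rewrite nneseriesZr_e; last 2 first.
- by move=> n; apply: mule_ge0 => //; rewrite lee_fin exprn_ge0.
- apply: adde_ge0; last by apply: mule_ge0.
  by apply: mule_ge0 => //; apply: adde_ge0 => //; apply: mule_ge0.
rewrite muleC; congr (_ * _); last first.
  by rewrite /=; apply: eq_eseriesr => n _; rewrite addnS.
rewrite ge0_muleDl //; last by apply: mule_ge0.
rewrite /= -muleA -EFinM -exprSr /cmu muleAC -EFinM -addeA -ge0_muleDl; last 2 first.
- by rewrite lee_fin !mulr_ge0 ?exprn_ge0.
- by rewrite lee_fin.
congr (_ + (_%:E * _)).
rewrite /Zr; case: (r) hr => [|r0] hr; first by rewrite !mul0r addr0.
case: m {IH inner Zm Zm0 cmu cmu0 Ecomp Nn0 Zr Zr0} hr => [|m] hr /=.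
  have -> : r0 = 0%N by lia.
  by rewrite !mul0r add0r mul1r.
by rewrite -mulrA -exprSr -natr1 mulrDl mul1r.
Qed.

End B.

Section C.
Context {R : realType} {d : measure_display} {X : measurableType d}.

Lemma sum_ge0_eq0 (c : seq (X * R)) : (forall p, p \in c -> (0 <= p.2)%R) ->
  (\sum_(p <- c) p.2)%R = 0%R -> forall p, p \in c -> p.2 = 0%R.
Proof.
elim: c => [|a c IH] h0 //= hs p.
rewrite big_cons in hs.
have a0 : (0 <= a.2)%R by apply: h0; rewrite mem_head.
have s0 : (0 <= \sum_(q <- c) q.2)%R.
  rewrite big_seq; apply: sumr_ge0 => q qc; apply: h0.
  by rewrite in_cons qc orbT.
move/eqP: hs; rewrite paddr_eq0 // => /andP[/eqP ha /eqP hc].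
rewrite in_cons => /orP[/eqP -> //|pc].
by apply: IH => // q qc; apply: h0; rewrite in_cons qc orbT.
Qed.

Lemma tw_ge0 (c : seq (X * R)) : (forall p, p \in c -> (0 <= p.2)%R) ->
  (0 <= total_weight c)%R.
Proof. by move=> h; rewrite /total_weight big_seq; apply: sumr_ge0. Qed.

Variable f : nat -> R.-pker X ~> X.
Variable t : nat.
Variable c : seq (X * R).
Hypothesis c0 : forall p, p \in c -> (0 <= p.2)%R.

Let w0 p : p \in c -> (0 <= p.2 / total_weight c)%R.
Proof. by move=> pc; rewrite divr_ge0 // ?c0 // tw_ge0. Qed.

Lemma try_EZ (C : \bar R) (phi : X -> \bar R) : 0 <= C ->
  (forall y, 0 <= phi y) -> measurable_fun setT phi ->
  try_exp f t c (fun y => C * phi y) = C * try_exp f t c phi.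
Proof.
move=> C0 phi0 mphi; rewrite /try_exp.
under eq_bigr do rewrite ge0_integralZl // muleCA.
rewrite big_seq_cond [in RHS]big_seq_cond ge0_sume_distrr //.
move=> p /andP[pc _]; apply: mule_ge0; first by rewrite lee_fin w0.
by apply: integral_ge0.
Qed.

Lemma try_ED (phi psi : X -> \bar R) :
  (forall y, 0 <= phi y) -> measurable_fun setT phi ->
  (forall y, 0 <= psi y) -> measurable_fun setT psi ->
  try_exp f t c (fun y => phi y + psi y) = try_exp f t c phi + try_exp f t c psi.
Proof.
move=> p0 mp q0 mq; rewrite /try_exp -big_split /=.
apply: eq_bigr => p _; rewrite ge0_integralD // ge0_muleDr //;
  by apply: integral_ge0.
Qed.

Lemma try_E0 (phi : X -> \bar R) : (forall y, 0 <= phi y) -> 0 <= try_exp f t c phi.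
Proof.
move=> p0; rewrite /try_exp big_seq; apply: sume_ge0 => p pc.
by apply: mule_ge0; [rewrite lee_fin w0|apply: integral_ge0].
Qed.

Lemma try_le (phi psi : X -> \bar R) : (forall y, 0 <= phi y) ->
  measurable_fun setT phi -> measurable_fun setT psi ->
  (forall y, phi y <= psi y) -> try_exp f t c phi <= try_exp f t c psi.
Proof.
move=> p0 mp mq le; rewrite /try_exp big_seq [in leRHS]big_seq.
apply: lee_sum => p pc; apply: lee_wpmul2l; first by rewrite lee_fin w0.
by apply: ge0_le_integral.
Qed.

Lemma try_one : try_exp f t c (fun _ => 1) = (\sum_(p <- c) (p.2 / total_weight c))%:E.
Proof.
rewrite /try_exp -sumEFin; apply: eq_bigr => p _.
have -> : \int[f t p.1]_x 1 = \int[f t p.1]_x (cst 1 x) by [].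
by rewrite integral_cst // mul1e prob_kernel mule1.
Qed.

End C.

Lemma fin_split {R : realType} (a b : \bar R) (r : R) : 0 <= a -> 0 <= b -> a + b = r%:E ->
  a = (fine a)%:E.
Proof. by case: a => [a| |] //; case: b. Qed.

Section D.
Context {R : realType} {d dy : measure_display} {X : measurableType d} {Y : measurableType dy}.
Variable f : nat -> R.-pker X ~> X.
Variable g : nat -> X -> Y -> R.
Variable y : nat -> Y.
Hypothesis g_ge0 : forall t' x y', (0 <= g t' x y')%R.
Hypothesis g_meas : forall t', measurable_fun setT (fun x => g t' x (y t')).

Lemma obs_ge0 t len x : 0 <= obs_density f g y t len x.
Proof.
elim: len t x => [|len IH] t x //=.
by apply: integral_ge0 => x' _; apply: mule_ge0 => //; rewrite lee_fin.
Qed.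

Lemma obs_meas t len : measurable_fun setT (obs_density f g y t len).
Proof.
elim: len t => [|len IH] t /=; first exact: measurable_cst.
apply: (measurable_fun_integral_kernel (measurable_kernel (f t))).
  by move=> x'; apply: mule_ge0; [rewrite lee_fin|apply: obs_ge0].
apply: emeasurable_funM => //.
by apply/measurable_EFinP; apply: g_meas.
Qed.

Variable N : nat.
Hypothesis N_ge1 : (1 <= N)%N.

Lemma SL t (c : seq (X * R)) (c0 : forall p, p \in c -> (0 <= p.2)%R) (a : R)
  (a0 : (0 <= a)%R) (q : X -> \bar R) (q0 : forall x, 0 <= q x)
  (mq : measurable_fun setT q) :
  loops_exp (try_exp f t c) (fun x => g t x (y t)) N.+1
   (fun outs => \sum_(p <- [seq (o.2, g t o.2 (y t)) | o <- take N outs])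
       ((p.2 * (a / ((sumn [seq o.1 | o <- outs]).-1)%:R))%:E * q p.1))
  = a%:E * try_exp f t c (fun x => (g t x (y t))%:E * q x).
Proof.
pose H := fun x => (g t x (y t))%:E * q x.
have H0 x : 0 <= H x by apply: mule_ge0 => //; rewrite lee_fin.
have mH : measurable_fun setT H.
  by apply: emeasurable_funM => //; apply/measurable_EFinP; apply: g_meas.
pose beta P := (a / (P.-1)%:R)%:E.
have beta0 P : 0 <= beta P by rewrite lee_fin divr_ge0.
have -> : (fun outs => \sum_(p <- [seq (o.2, g t o.2 (y t)) | o <- take N outs])
       ((p.2 * (a / ((sumn [seq o.1 | o <- outs]).-1)%:R))%:E * q p.1)) =
   (fun outs : seq (nat * X) => (0 + \sum_(o <- take N outs) H o.2) *
       beta (0 + sumn [seq o.1 | o <- outs])%N).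
  apply/funext => outs; rewrite add0e add0n big_map ge0_sume_distrl //.
  by apply: eq_bigr => o _; rewrite /H /beta /= EFinM muleAC.
set G := fun x => g t x (y t).
set E := try_exp f t c.
have mG : measurable_fun setT G by apply: g_meas.
have EZ := try_EZ f t c0.
have ED := try_ED f t c.
have E0 := try_E0 f t c0.
have mif' (u v : \bar R) : measurable_fun setT (fun x => if (0 < G x)%R then u else v).
  by apply: mif => //; exact: measurable_cst.
have e01 : E (fun x => if (0 < G x)%R then 0 else 1) +
           E (fun x => if (0 < G x)%R then 1 else 0) =
           (\sum_(p <- c) (p.2 / total_weight c))%:E.
  rewrite -ED; last 4 first.
  - by move=> x; case: ifP.
  - exact: mif'.
  - by move=> x; case: ifP.
  - exact: mif'.
  rewrite -(try_one f t c) /E; congr try_exp; apply/funext => x.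
  by case: ifP; rewrite ?add0e ?adde0.
have p00 : 0 <= E (fun x => if (0 < G x)%R then 0 else 1) by apply: E0 => x; case: ifP.
have p10 : 0 <= E (fun x => if (0 < G x)%R then 1 else 0) by apply: E0 => x; case: ifP.
have p0E := fin_split p00 p10 e01.
rewrite addeC in e01.
have p1E := fin_split p10 p00 e01.
rewrite addeC in e01.
set x := fine _ in p0E.
set z := fine _ in p1E.
have x0 : (0 <= x)%R by rewrite /x fine_ge0.
have z0 : (0 <= z)%R by rewrite /z fine_ge0.
rewrite (GL EZ ED E0 mG H0 mH x0 z0 p0E p1E beta0) //.
have EH : E (fun x1 => (g t x1 (y t))%:E * q x1) =
          E (fun y0 => if (0 < G y0)%R then H y0 else 0).
  congr E; apply/funext => y0; rewrite /H /G; case: ifP => // /negbT.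
  rewrite -leNgt => Gle.
  have -> : g t y0 (y t) = 0%R by apply/eqP; rewrite eq_le Gle g_ge0.
  by rewrite mul0e.
rewrite -/E EH; set muH := E _.
have muH0 : 0 <= muH by apply: E0 => y0; case: ifP.
rewrite mul0e add0e (_ : N.+1.-1 = N) //.
have [zz|zn] := eqVneq z 0%R.
  have : muH <= E (fun y0 => +oo * (if (0 < G y0)%R then 1 else 0)).
    apply: try_le => //.
    - by move=> y0; case: ifP.
    - by apply: mif => //; exact: measurable_cst.
    - by apply: emeasurable_funM; [exact: measurable_cst|exact: mif'].
    - by move=> y0; case: ifP => _; rewrite ?mule1 ?mule0 ?leey.
  have h1 : E (fun y0 => +oo * (if (0 < G y0)%R then 1 else 0)) =
            +oo * E (fun y0 => if (0 < G y0)%R then 1 else 0).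
    apply: (EZ (+oo) (fun y0 => if (0 < G y0)%R then 1 else 0)) => //.
      by move=> y0; case: ifP.
  rewrite h1 p1E zz mule0 => muHle.
  have -> : muH = 0 by apply/eqP; rewrite eq_le muHle muH0.
  by rewrite !mule0 mul0e.
have W0 : total_weight c != 0%R.
  apply: contra zn => /eqP W0.
  move: e01; rewrite p0E p1E -EFinD.
  under eq_bigr do rewrite W0 invr0 mulr0.
  rewrite big1_eq => -[] /eqP; rewrite paddr_eq0 // => /andP[_ ->] //.
have xz : (x + z = 1)%R.
  move: e01; rewrite p0E p1E -EFinD -big_distrl /= -/(total_weight c) divff //.
  by case.
have x1 : (x < 1)%R.
  rewrite -xz ltrDl lt_def zn z0 //.
rewrite /beta nest_rho //.
rewrite muleAC -EFinM; congr (_%:E * _).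
have -> : (1 - x = z)%R by rewrite -xz addrC addKr.
have Nn : (N%:R : R) != 0%R by rewrite pnatr_eq0 -lt0n.
rewrite exprVn; field.
by rewrite Nn expf_neq0.
Qed.


Lemma cond_step s n (c : config X) F : apf_cond_exp N f g y s n.+1 c F =
  loops_exp (try_exp f s.+1 c) (fun x => g s.+1 x (y s.+1)) N.+1 (fun outs =>
    apf_cond_exp N f g y s.+1 n [seq (o.2, g s.+1 o.2 (y s.+1)) | o <- take N outs]
      (fun rest => F (([seq (o.2, g s.+1 o.2 (y s.+1)) | o <- take N outs],
                       sumn [seq o.1 | o <- outs]) :: rest))).
Proof. by []. Qed.

Lemma main h : forall s (c : config X) (a : R),
  (forall p, p \in c -> (0 <= p.2)%R) -> (0 <= a)%R ->
  apf_cond_exp N f g y s h.+1 c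
    (fun zs => a%:E * \prod_(z <- zs) ((total_weight z.1 / (z.2.-1)%:R)%R)%:E)
  = a%:E * \sum_(p <- c) ((p.2 / total_weight c)%R%:E
                     * obs_density f g y s.+1 h.+1 p.1).
Proof.
elim: h => [|h IH] s c a c0 a0.
  rewrite cond_step.
  transitivity (a%:E * try_exp f s.+1 c
     (fun x => (g s.+1 x (y s.+1))%:E * obs_density f g y s.+2 0 x)); last by [].
  rewrite -(@SL s.+1 c c0 a a0 _ (obs_ge0 s.+2 0) (obs_meas s.+2 0)).
  congr (loops_exp _ _ _ _); apply/funext => outs.
  set c' := [seq _ | o <- take N outs]; set P := sumn _.
  rewrite /= big_cons big_nil mule1.
  under eq_bigr do rewrite mule1.
  by rewrite sumEFin -big_distrl /= -EFinM mulrCA mulrA.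
rewrite cond_step.
transitivity (a%:E * try_exp f s.+1 c
   (fun x => (g s.+1 x (y s.+1))%:E * obs_density f g y s.+2 h.+1 x)); last by [].
rewrite -(@SL s.+1 c c0 a a0 _ (obs_ge0 s.+2 h.+1) (obs_meas s.+2 h.+1)).
congr (loops_exp _ _ _ _); apply/funext => outs.
set c' := [seq _ | o <- take N outs]; set P := sumn _.
have c'0 p : p \in c' -> (0 <= p.2)%R.
  by case/mapP => o _ ->; apply: g_ge0.
have W0 : (0 <= total_weight c')%R by apply: tw_ge0.
have b0 : (0 <= a * (total_weight c' / P.-1%:R))%R.
  by rewrite mulr_ge0 // divr_ge0.
rewrite (_ : (fun rest => _) = (fun rest : seq (config X * nat) =>
   (a * (total_weight c' / P.-1%:R))%:E *
     \prod_(z <- rest) (total_weight z.1 / z.2.-1%:R)%:E)); last first.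
  by apply/funext => rest; rewrite big_cons muleA -EFinM.
rewrite IH //.
have [Wz|Wn] := eqVneq (total_weight c') 0%R.
  rewrite Wz mul0r mulr0 mul0e big_seq big1 // => p pc.
  by rewrite (sum_ge0_eq0 c'0 Wz pc) mul0r mul0e.
rewrite big_seq [RHS]big_seq ge0_sume_distrr; last first.
  move=> p pc; apply: mule_ge0; last exact: obs_ge0.
  by rewrite lee_fin divr_ge0 // c'0.
apply: eq_bigr => p pc; rewrite muleA -EFinM; congr (_%:E * _).
have [P0|Pn] := eqVneq (P.-1%:R : R) 0%R.
  by rewrite P0 !invr0 !mulr0 mul0r.
by field; rewrite Pn Wn.
Qed.

End D.


Theorem lemma3 (R : realType) (d dy : measure_display)
  (X : measurableType d) (Y : measurableType dy)
  (f : nat -> R.-pker X ~> X) (g : nat -> X -> Y -> R) (y : nat -> Y)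
  (N T t h : nat) (c : config X)
  (g_ge0 : forall t' x y', (0 <= g t' x y')%R)
  (g_meas : forall t', measurable_fun setT (fun x => g t' x (y t')))
  (N_ge1 : (1 <= N)%N) (t_le_T : (t <= T)%N) (th : (1 <= t - h)%N)
  (size_c : size c = N) (c_pos : forall p, p \in c -> (0 < p.2)%R) :
  apf_cond_exp N f g y (t - h).-1 h.+1 c
    (fun zs => \prod_(z <- zs)
                 ((total_weight z.1 / (z.2.-1)%:R)%R)%:E)
  = \sum_(p <- c) ((p.2 / total_weight c)%R%:E
                     * obs_density f g y (t - h) h.+1 p.1).
Proof.
have c0 p : p \in c -> (0 <= p.2)%R by move=> pc; apply: ltW; apply: c_pos.
have := @main R d dy X Y f g y g_ge0 g_meas N N_ge1 h ((t - h).-1) c 1%R c0 ler01.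
rewrite prednK // mul1e => <-.
congr (apf_cond_exp _ _ _ _ _ _ _ _); apply/funext => zs.
by rewrite mul1e.
Qed.
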